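(* Let $A$ be a non-trivial finite group and $m$ an odd positive integer with $\gcd(|A|,m)=1$. Let $B$ be a maximal subgroup of $A$ with $\psi(B)\ge\psi(B')$ for every maximal subgroup $B'$ of $A$. (i) If $\psi(A)/\psi(B)\le 7$, then $B\times\mathcal{C}_m$ is a maximal subgroup of $A\times\mathcal{C}_m$ attaining the maximum value of $\psi$ among the maximal subgroups (equivalently, among all proper subgroups) of $A\times\mathcal{C}_m$. (ii) If $B$ is cyclic and $|A:B|=2$, then $\psi(A)/\psi(B)\le7$, so the conclusion of (i) holds.
   Context: $\psi(G)=\sum_{x\in G}o(x)$ for a finite group $G$; $\mathcal{C}_n$ is the cyclic group of order $n$. *)

(* Defs.v *)
From mathcomp Require Import all_boot all_fingroup all_solvable.
Set Implicit Arguments. Unset Strict Implicit. Unset Printing Implicit Defensive.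

Definition psi (gT : finGroupType) (G : {set gT}) : nat := \sum_(x in G) #[x]%g.

(* Main.v *)
Require Import Defs.
From mathcomp Require Import all_boot all_fingroup all_solvable.
Set Implicit Arguments. Unset Strict Implicit. Unset Printing Implicit Defensive.

Lemma psi_sub (gT : finGroupType) (H K : {set gT}) : H \subset K -> psi H <= psi K.
Proof.
move=> sHK; rewrite /psi [X in X <= _]big_mkcond [X in _ <= X]big_mkcond /=.
apply: leq_sum => x _; case: ifP => hx //; by rewrite (subsetP sHK x hx).
Qed.

Section Prod.
Variables gT hT : finGroupType.

Lemma expg_pair n (a : gT) (c : hT) : ((a,c) ^+ n)%g = (a ^+ n, c ^+ n)%g.
Proof. by elim: n => [|n IH]; rewrite ?expg0 // !expgS IH. Qed.

Lemma order_pair (a : gT) (c : hT) : #[(a,c)]%g = lcmn #[a]%g #[c]%g.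
Proof.
apply/eqP; rewrite eqn_dvd; apply/andP; split.
  rewrite order_dvdn expg_pair.
  have /eqP-> : (a ^+ lcmn #[a] #[c] == 1)%g by rewrite -order_dvdn dvdn_lcml.
  have /eqP-> : (c ^+ lcmn #[a] #[c] == 1)%g by rewrite -order_dvdn dvdn_lcmr.
  by [].
have E := expg_order (a,c); rewrite expg_pair in E.
have E1 := congr1 fst E; have E2 := congr1 snd E; simpl in E1, E2.
by rewrite dvdn_lcm !order_dvdn E1 E2 !eqxx.
Qed.

Lemma order_pair_coprime (a : gT) (c : hT) : coprime #[a]%g #[c]%g ->
  #[(a,c)]%g = #[a]%g * #[c]%g.
Proof. by move=> co; rewrite order_pair /lcmn (eqP co) divn1. Qed.

Lemma psi_setX (X : {set gT}) (Y : {set hT}) :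
  (forall a c, a \in X -> c \in Y -> coprime #[a]%g #[c]%g) ->
  psi (setX X Y) = psi X * psi Y.
Proof.
move=> co; rewrite /psi big_distrl /=; symmetry.
under eq_bigr do rewrite big_distrr /=.
rewrite pair_big /=; symmetry; apply: eq_big => [[a c]|[a c]]; rewrite ?in_setX //=.
by move=> /andP[ha hc]; rewrite order_pair_coprime // co.
Qed.

End Prod.


Section G.
Variable gT : finGroupType.
Implicit Types (x y : gT) (X Y : {set gT}).

Lemma psiU X Y : [disjoint X & Y] -> psi (X :|: Y) = psi X + psi Y.
Proof. by move=> dXY; rewrite /psi -bigU //; apply: eq_bigl => x; rewrite !inE. Qed.

Lemma psi_rcoset X v : psi (X :* v)%g = \sum_(k in X) #[k * v]%g.
Proof.
rewrite /psi (reindex_inj (mulIg v)) /=; apply: eq_bigl => k.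
by rewrite mem_rcoset mulgK.
Qed.

Lemma disj_rcoset (K : {group gT}) v w : (w * v^-1 \notin K)%g ->
  [disjoint K :* v & K :* w]%g.
Proof.
move=> H; apply/pred0P => c /=; rewrite !mem_rcoset; apply/negP => /andP[h1 h2].
apply: (negP H); have := groupM (groupVr h2) h1.
by rewrite invMg invgK mulgA mulgKV.
Qed.

Lemma ord_split p x : #[x]%g = #[x.`_p]%g * #[x.`_p^']%g.
Proof. by rewrite !order_constt partnC // order_gt0. Qed.

Lemma pelt_dvd_part (G : {group gT}) x (p : nat) : x \in G -> (p.-elt x)%g ->
  #[x]%g %| #|G|`_p.
Proof.
move=> xG px; rewrite -(part_pnat_id px); exact: partn_dvd (cardG_gt0 G) (order_dvdG xG).
Qed.

Lemma lift_order p e (a b : gT) : prime p -> commute a b -> #[a]%g %| p ^ e ->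
  #[a * b]%g %| p ^ e.+1 -> #[b]%g = p ^ e.+1 -> #[a * b]%g = p ^ e.+1.
Proof.
move=> pr cab da dab ob.
case/(dvdn_pfactor _ _ pr): dab => j; rewrite leq_eqVlt => /orP[/eqP -> //|ltj] ej.
have dab : #[a * b]%g %| p ^ e by rewrite ej dvdn_exp2l // -ltnS.
have : #[b]%g %| p ^ e.
  have -> : b = (a^-1 * (a * b))%g by rewrite mulKg.
  rewrite order_dvdn expgMn; last by rewrite /commute mulKg cab mulgK.
  by rewrite expgVn (eqP (_ : a ^+ (p ^ e) == 1)%g) -?order_dvdn // invg1 mul1g -order_dvdn.
rewrite ob => /dvdn_leq; rewrite expn_gt0 prime_gt0 // => /(_ isT).
by rewrite leq_exp2l ?prime_gt1 // ltnn.
Qed.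

End G.


Lemma psi_cyc7 (gT : finGroupType) (C K : {group gT}) :
  cyclic C -> odd #|C| -> (K \proper C)%g -> 7 * psi K <= psi C.
Proof.
move=> cycC oddC prKC; have sKC := proper_sub prKC.
have cC := cyclic_abelian cycC.
have comm : forall x y, x \in C -> y \in C -> commute x y.
  by move=> x y xC yC; apply: (centsP cC).
have ix1 : 1 < #|C : K|%g by rewrite indexg_gt1 proper_subn.
have [p pr_p p_dvd] := pdivP ix1.
have pC : p %| #|C| := dvdn_trans p_dvd (dvdn_indexg C K).
have p3 : 2 < p.
  have := prime_gt1 pr_p; have := dvdn_odd pC oddC.
  by case: (p) => [|[|[|q]]].
set N := #|C|`_p.
have [e eN] : exists e, N = p ^ e.+1.
  exists (logn p #|C|).-1; rewrite prednK; first exact: p_part.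
  by rewrite logn_gt0 mem_primes pr_p pC cardG_gt0.
have NK : #|K|`_p %| p ^ e.
  rewrite -(dvdn_pmul2r (prime_gt0 pr_p)) -expnSr. idtac.
  rewrite -eN. rewrite /N. rewrite -(Lagrange sKC).
  rewrite partnM ?cardG_gt0 ?indexg_gt0 // dvdn_mul //.
  rewrite p_part -{1}(expn1 p) dvdn_exp2l // logn_gt0 mem_primes pr_p p_dvd.
  by rewrite indexg_gt0.
have notK : forall x, #[x]%g = N -> x \notin K.
  move=> x ox; apply/negP => xK.
  have := partn_dvd p (cardG_gt0 K) (order_dvdG xK).
  have pN : p.-nat N := part_pnat p #|C|.
  rewrite ox (part_pnat_id pN) eN => /(dvdn_trans)/(_ NK).
  move/dvdn_leq; rewrite expn_gt0 prime_gt0 // => /(_ isT).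
  by rewrite leq_exp2l ?prime_gt1 // ltnn.
have key : forall v, v \in C -> (p.-elt v)%g -> #[v]%g = N ->
    forall k, k \in K -> p * #[k]%g <= #[k * v]%g.
  move=> v vC pv ov k kK; have kC := subsetP sKC k kK.
  have ckv := comm _ _ kC vC.
  have kpC : (k.`_p \in C)%g by apply: (subsetP _ _ (cycle_constt p k)); rewrite cycle_subG.
  have kpK : (k.`_p \in K)%g by apply: (subsetP _ _ (cycle_constt p k)); rewrite cycle_subG.
  rewrite (ord_split p (k * v)) (ord_split p k) consttM // (constt_p_elt pv).
  rewrite consttM // (constt1P (_ : (p^')^'.-elt v)%g) ?p_eltNK // mulg1.
  have okp : #[k.`_p]%g %| p ^ e.
    by apply: dvdn_trans NK; apply: pelt_dvd_part => //; apply: p_elt_constt.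
  rewrite mulnA leq_mul2r; apply/orP; right.
  have kvC : (k.`_p * v \in C)%g by apply: groupM.
  have kvp : (p.-elt (k.`_p * v))%g.
    by apply: p_eltM; [apply: comm|apply: p_elt_constt|].
  rewrite (@lift_order _ p e) //; last 3 first.
  - exact: comm.
  - by rewrite -eN; apply: pelt_dvd_part.
  - by rewrite ov eN.
  by rewrite expnS leq_mul2l dvdn_leq ?orbT // expn_gt0 prime_gt0.
case/cyclicP: cycC => g defC.
set u := (g.`_p)%g.
have uC : u \in C by rewrite defC cycle_constt.
have ou : #[u]%g = N by rewrite order_constt /N defC -orderE.
have pu : (p.-elt u)%g by apply: p_elt_constt.
have oddN : odd N by apply: dvdn_odd oddC; rewrite /N; apply: dvdn_part.
have ou2 : #[u^-1 * u^-1]%g = N.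
  have -> : (u^-1 * u^-1 = u^-1 ^+ 2)%g by rewrite expgS expg1.
  rewrite orderXgcd orderV ou.
  have -> : gcdn N 2 = 1 by apply/eqP; rewrite -/(coprime N 2) coprimen2.
  by rewrite divn1.
have d1 : [disjoint K & K :* u]%g.
  by rewrite -{1}(rcoset1 K); apply: disj_rcoset; rewrite invg1 mulg1 notK.
have d2 : [disjoint K & K :* u^-1]%g.
  by rewrite -{1}(rcoset1 K); apply: disj_rcoset; rewrite invg1 mulg1 notK // orderV.
have d3 : [disjoint K :* u & K :* u^-1]%g by apply: disj_rcoset; rewrite notK.
have d12 : [disjoint K :|: K :* u & K :* u^-1]%g.
  rewrite -!setI_eq0 in d2 d3 *; by rewrite setIUl (eqP d2) (eqP d3) setU0.
have subR : forall v, v \in C -> (K :* v \subset C)%g.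
  move=> v vC; apply/subsetP => c; rewrite mem_rcoset => h.
  by have := groupM (subsetP sKC _ h) vC; rewrite mulgKV.
have uC' : (u^-1 \in C)%g by rewrite groupV.
have sU : (K :|: K :* u :|: K :* u^-1 \subset C)%g.
  by rewrite !subUset sKC !subR.
have bnd : forall v, v \in C -> (p.-elt v)%g -> #[v]%g = N -> 3 * psi K <= psi (K :* v)%g.
  move=> v vC pv ov; rewrite psi_rcoset; apply: (@leq_trans (p * psi K)).
    by rewrite leq_mul2r p3 orbT.
  rewrite /psi big_distrr /=; apply: leq_sum => k kK; exact: key.
apply: leq_trans (psi_sub sU); rewrite !psiU //.
have pu' : (p.-elt u^-1)%g by rewrite p_eltV.
have := bnd _ uC pu ou; have := bnd _ uC' pu' (etrans (orderV u) ou).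
move=> h1 h2; rewrite (_ : 7 = 1 + 3 + 3) // !mulnDl mul1n.
by apply: leq_add => //; apply: leq_add.
Qed.


Lemma arith7 (s : nat) : s + 2 * (s + s) <= 7 * s.
Proof. rewrite !mulSn !mul0n !addn0 !addnA; by rewrite -!addnA !leq_add2l leq_addr. Qed.

Lemma sum_sub (T : finType) (P Q : pred T) (F : T -> nat) :
  (forall i, P i -> Q i) -> \sum_(i | P i) F i <= \sum_(i | Q i) F i.
Proof.
move=> PQ; rewrite big_mkcond [X in _ <= X]big_mkcond /=.
by apply: leq_sum => i _; case: ifP => // /PQ ->.
Qed.

Section Idx2.
Variable gT : finGroupType.
Variables A B : {group gT}.
Hypotheses (sBA : B \subset A) (cycB : cyclic B) (iAB : #|A : B|%g = 2).

Lemma cos2 u v : u \in A -> v \in A -> u \notin B -> v \notin B -> (v * u^-1 \in B)%g.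
Proof.
move=> uA vA uB vB.
have dj : B :&: (B :* u)%g = set0.
  apply/setP => c; rewrite !inE mem_rcoset; apply/negP => /andP[h1 h2].
  by apply: (negP uB); have := groupM (groupVr h2) h1; rewrite invMg invgK mulgKV.
have subR : (B :* u \subset A)%g.
  apply/subsetP => c; rewrite mem_rcoset => h.
  by have := groupM (subsetP sBA _ h) uA; rewrite mulgKV.
have eqA : B :|: (B :* u)%g = A.
  apply/eqP; rewrite eqEcard subUset sBA subR /= cardsU dj cards0 subn0 card_rcoset.
  by rewrite -(Lagrange sBA) iAB muln2 addnn.
have : v \in B :|: (B :* u)%g by rewrite eqA.
by rewrite inE (negbTE vB) /= mem_rcoset.
Qed.

Lemma sq2 y : y \in A -> (y * y \in B)%g.
Proof.
move=> yA; case: (boolP (y \in B)) => yB; first by rewrite groupM.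
have := @cos2 y^-1%g y; rewrite invgK; apply=> //; by rewrite ?groupV.
Qed.

Lemma conj2 y b : y \in A -> b \in B -> (b ^ y \in B)%g.
Proof.
move=> yA bB; case: (boolP (y \in B)) => yB; first by rewrite groupJ.
have bA := subsetP sBA _ bB.
have h := @cos2 y^-1%g (y^-1 * b)%g; rewrite invgK in h; rewrite conjgE mulgA; apply: h.
- by rewrite groupV.
- by rewrite groupM ?groupV.
- by rewrite groupV.
- by apply/negP => h'; apply: (negP yB); have := groupM h' (groupVr bB); rewrite mulgK groupV.
Qed.

Lemma odd2 y : y \in A -> odd #[y]%g -> y \in B.
Proof.
move=> yA oy; have := sq2 yA.
have -> : (y * y = y ^+ 2)%g by rewrite expgS expg1.
move/(groupX ((#[y]%g).+1./2)); rewrite -expgM mulnC muln2.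
have := odd_double_half (#[y]%g).+1; rewrite /= oy /= add0n => ->.
by rewrite expgSr expg_order mul1g.
Qed.


Lemma psi_idx2 : psi A <= 7 * psi B.
Proof.
have cB := cyclic_abelian cycB.
have comm : forall x y, x \in B -> y \in B -> commute x y.
  by move=> x y xB yB; apply: (centsP cB).
have [y0 y0A y0B] : exists2 y0, y0 \in A & y0 \notin B.
  by apply/subsetPn; rewrite -indexg_gt1 iAB.
set x := (y0.`_2)%g.
have inC : forall (G : {group gT}) z (pi : nat_pred), z \in G -> (z.`_pi \in G)%g.
  by move=> G z pi zG; apply: (subsetP _ _ (cycle_constt pi z)); rewrite cycle_subG.
have xA : x \in A by apply: inC.
have x2 : (2.-elt x)%g by apply: p_elt_constt.
have xB : x \notin B.
  apply/negP => xB; apply: (negP y0B); rewrite -(consttC 2 y0) groupM //.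
  apply: (odd2 (inC _ _ _ y0A)).
  by rewrite order_constt odd_2'nat part_pnat.
have xiA : (x^-1 \in A)%g by rewrite groupV.
case/cyclicP: (cycB) => b0 defB.
set N := #|B|`_2.
set g := (b0.`_2)%g.
have gB : g \in B by rewrite defB cycle_constt.
have og : #[g]%g = N by rewrite order_constt /N defB -orderE.
have g2 : (2.-elt g)%g by apply: p_elt_constt.
have N0 : 0 < N by apply: part_gt0.
have pw1 : forall w, w \in B -> #[w * x]%g <= 2 * N * #[w.`_2^']%g.
  move=> w wB; set y := (w * x)%g.
  have yA : y \in A by rewrite groupM // (subsetP sBA).
  have yyB := sq2 yA.
  have h1 : #[y]%g <= 2 * #[y * y]%g.
    apply: dvdn_leq; first by rewrite muln_gt0 order_gt0.
    rewrite order_dvdn expgM.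
    have -> : (y ^+ 2 = y * y)%g by rewrite expgS expg1.
    by rewrite expg_order.
  have wxB : (w ^ x^-1 \in B)%g by apply: conj2.
  have ssB : (x * x \in B)%g by apply: sq2.
  have eyy : (y * y = w * (w ^ x^-1) * (x * x))%g.
    by rewrite /y conjgE invgK !mulgA mulgKV.
  set q := (w.`_2^')%g.
  have qB : q \in B by apply: inC.
  have qxB : (q ^ x^-1 \in B)%g by apply: conj2.
  have e2 : ((y * y).`_2^' = q * q ^ x^-1)%g.
    rewrite eyy consttM; last by apply: comm => //; rewrite groupM.
    rewrite consttM; last by apply: comm.
    rewrite (constt1P (_ : (2^')^'.-elt (x * x))%g) ?mulg1 ?consttJ //.
    by rewrite p_eltNK; apply: p_eltM.
  have h2 : #[(y * y).`_2^']%g <= #[q]%g.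
    apply: dvdn_leq; first exact: order_gt0.
    rewrite e2 order_dvdn expgMn; last by apply: comm.
    by rewrite -conjXg expg_order conj1g mulg1.
  have h3 : #[(y * y).`_2]%g <= N.
    apply: dvdn_leq => //; apply: pelt_dvd_part; [exact: inC|exact: p_elt_constt].
  apply: (leq_trans h1); rewrite (ord_split 2 (y * y)) -mulnA leq_mul2l /=.
  exact: leq_mul.
have pw2 : forall w, w \in B -> N * #[w.`_2^']%g <= #[w]%g + #[w * g]%g.
  move=> w wB.
  have cwg := comm _ _ wB gB.
  rewrite (ord_split 2 w) (ord_split 2 (w * g)) !consttM // (constt_p_elt g2).
  rewrite (constt1P (_ : (2^')^'.-elt g)%g) ?p_eltNK // mulg1 -mulnDl leq_mul2r.
  apply/orP; right.
  have w2B : (w.`_2 \in B)%g by apply: inC.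
  have ow2 : #[w.`_2]%g %| N by apply: pelt_dvd_part => //; apply: p_elt_constt.
  have ow2g : #[w.`_2 * g]%g %| N.
    apply: pelt_dvd_part; first by rewrite groupM.
    by apply: p_eltM; [apply: comm|apply: p_elt_constt|].
  have [e eN] : exists e, N = 2 ^ e by exists (logn 2 #|B|); apply: p_part.
  case: e eN => [|e] eN.
    by rewrite eN; apply: leq_trans (leq_addr _ _); exact: order_gt0.
  case: (altP (#[w.`_2]%g =P N)) => [-> | ne]; first exact: leq_addr.
  have ow2' : #[w.`_2]%g %| 2 ^ e.
    move: ow2; rewrite eN => /(dvdn_pfactor _ _ (isT : prime 2))[j].
    rewrite leq_eqVlt => /orP[/eqP -> | ltj] ej; first by move: ne; rewrite ej eN eqxx.
    by rewrite ej dvdn_exp2l // -ltnS.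
  have cc : commute (w.`_2)%g g by apply: comm.
  have d1 : #[w.`_2 * g]%g %| 2 ^ e.+1 by rewrite -eN.
  have d2 : #[g]%g = 2 ^ e.+1 by rewrite og.
  by rewrite (lift_order (isT : prime 2) cc ow2' d1 d2) -eN leq_addl.
rewrite /psi (bigID (mem B)) /=.
have -> : \sum_(i in A | i \in B) #[i]%g = \sum_(i in B) #[i]%g.
  by apply: eq_bigl => i; rewrite /= andb_idl // => /(subsetP sBA).
have S1 : \sum_(i in A | i \notin B) #[i]%g <= \sum_(w in B) 2 * N * #[w.`_2^']%g.
  apply: (@leq_trans (\sum_(i in A | i \notin B) 2 * N * #[(i * x^-1).`_2^']%g)).
    apply: leq_sum => i /andP[iA iB].
    have wB : (i * x^-1 \in B)%g by apply: (cos2 xA).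
    by have := pw1 _ wB; rewrite mulgKV.
  rewrite (reindex_inj (mulIg x)) /=; under eq_bigr do rewrite mulgK.
  apply: sum_sub => w /andP[wA wB].
  by have := cos2 xA wA xB wB; rewrite mulgK.
have S2 : \sum_(w in B) #[w * g]%g = \sum_(w in B) #[w]%g.
  by rewrite [RHS](reindex_inj (mulIg g)) /=; apply: eq_bigl => w; rewrite groupMr.
have S3 : \sum_(w in B) 2 * N * #[w.`_2^']%g <= 2 * (\sum_(w in B) #[w]%g + \sum_(w in B) #[w]%g).
  rewrite -{2}S2 -big_split /= big_distrr /=; apply: leq_sum => w wB.
  by rewrite -mulnA leq_mul2l /= pw2.
set s := \sum_(w in B) #[w]%g.
apply: leq_trans (leq_add (leqnn s) (leq_trans S1 S3)) _.
exact: arith7.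
Qed.

End Idx2.


Section Main.
Variables (gT hT : finGroupType) (A B : {group gT}) (C : {group hT}) (m : nat).
Hypotheses (m0 : 0 < m) (oddm : odd m) (coAm : coprime #|A| m) (cycC : cyclic C)
  (oC : #|C| = m) (maxB : maximal B A)
  (bestB : forall B' : {group gT}, maximal B' A -> psi B' <= psi B).

Let M1 (M : {group gT * hT}) := (pairg1 hT @*^-1 M)%G.
Let M2 (M : {group gT * hT}) := (@pair1g gT hT @*^-1 M)%G.

Lemma inM1 (M : {group gT * hT}) a : (a \in M1 M) = ((a, 1%g) \in M).
Proof. by rewrite /M1 /= morphpreE !inE. Qed.
Lemma inM2 (M : {group gT * hT}) c : (c \in M2 M) = ((1%g, c) \in M).
Proof. by rewrite /M2 /= morphpreE !inE. Qed.

Lemma coAC a c : a \in A -> c \in C -> coprime #[a]%g #[c]%g.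
Proof.
move=> aA cC; apply: coprime_dvdl (order_dvdG aA) _.
by apply: coprime_dvdr (order_dvdG cC) _; rewrite oC.
Qed.

Lemma split_elt (M : {group gT * hT}) a c :
  M \subset setX A C -> (a, c) \in M -> (a, 1%g) \in M /\ (1%g, c) \in M.
Proof.
move=> sM acM; have := subsetP sM _ acM; rewrite in_setX => /andP[aA cC].
set k := chinese #|A| m 1 0.
have ek : ((a, c) ^+ k = (a, 1))%g.
  rewrite expg_pair -(expg_mod_order a) -(expg_mod_order c).
  have -> : k %% #[a]%g = 1 %% #[a]%g.
    by rewrite -(modn_dvdm k (order_dvdG aA)) chinese_modl // modn_dvdm // order_dvdG.
  have -> : k %% #[c]%g = 0.
    have dc : #[c]%g %| m by rewrite -oC order_dvdG.
    by rewrite -(modn_dvdm k dc) chinese_modr // !mod0n.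
  by rewrite expg_mod_order expg1 expg0.
have a1 : (a, 1%g) \in M by rewrite -ek groupX.
split=> //.
have := groupM (groupVr a1) acM.
by change ((a^-1 * a, (1 : hT)^-1 * c)%g \in M -> (1%g, c) \in M); rewrite mulVg invg1 mul1g.
Qed.


Lemma sBA : B \subset A.
Proof. exact: proper_sub (maxgroupp maxB). Qed.

Lemma psiBC : psi (setX B C) = psi B * psi C.
Proof. by apply: psi_setX => a c aB cC; apply: coAC => //; apply: (subsetP sBA). Qed.

Lemma pair_mem (M : {group gT * hT}) a c : (a, 1%g) \in M -> (1%g, c) \in M -> (a, c) \in M.
Proof.
move=> h1 h2; have := groupM h1 h2.
by change ((a * 1, 1 * c)%g \in M -> (a, c) \in M); rewrite mulg1 mul1g.
Qed.

Lemma proper_bound (M : {group gT * hT}) : psi A <= 7 * psi B ->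
  (M \proper setX A C)%g -> psi M <= psi (setX B C).
Proof.
move=> h7 prM; have sM := proper_sub prM.
have sM12 : M \subset setX (M1 M) (M2 M).
  apply/subsetP => -[a c] acM; have [h1 h2] := split_elt sM acM.
  by rewrite in_setX inM1 inM2 h1 h2.
have M1A : M1 M \subset A.
  apply/subsetP => a; rewrite inM1 => /(subsetP sM); by rewrite in_setX => /andP[].
have M2C : M2 M \subset C.
  apply/subsetP => c; rewrite inM2 => /(subsetP sM); by rewrite in_setX => /andP[].
rewrite psiBC; apply: leq_trans (psi_sub sM12) _.
case: (maximal_exists M1A) => [eA | [B' maxB' sB']].
  case: (maximal_exists M2C) => [eC | [K maxK sK]].
    exfalso; apply: (negP (proper_subn prM)); apply/subsetP => -[a c].
    rewrite in_setX => /andP[aA cC]; apply: pair_mem.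
      by rewrite -inM1 eA.
    by rewrite -inM2 eC.
  apply: leq_trans (psi_sub (setXS M1A sK)) _.
  rewrite psi_setX; last by move=> a c aA cK; apply: coAC => //; apply: (subsetP (proper_sub (maxgroupp maxK))).
  have h := psi_cyc7 cycC (_ : odd #|C|) (maxgroupp maxK).
  rewrite oC in h; have {}h := h oddm.
  apply: leq_trans (leq_mul h7 (leqnn _)) _.
  by rewrite -mulnA mulnCA leq_mul2l h orbT.
apply: leq_trans (psi_sub (setXS sB' M2C)) _.
rewrite psi_setX; last by move=> a c aB cC; apply: coAC => //; apply: (subsetP (proper_sub (maxgroupp maxB'))).
by rewrite leq_mul2r bestB ?orbT.
Qed.

Lemma maxBC : maximal (setX B C) (setX A C).
Proof.
have [y0 y0A y0B] : exists2 y0, y0 \in A & y0 \notin B.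
  by apply/subsetPn; apply: proper_subn (maxgroupp maxB).
apply/maxgroupP; split.
  rewrite properE setXS ?sBA //=; apply/subsetPn; exists (y0, 1%g).
    by rewrite in_setX y0A group1.
  by rewrite in_setX (negbTE y0B).
move=> H prH sBCH; have sH := proper_sub prH.
have [_ maxB2] := maxgroupP maxB.
have BH1 : B \subset M1 H.
  by apply/subsetP => b bB; rewrite inM1 (subsetP sBCH) // in_setX bB group1.
have H1A : M1 H \subset A.
  apply/subsetP => a; rewrite inM1 => /(subsetP sH); by rewrite in_setX => /andP[].
have prH1 : (M1 H \proper A)%g.
  rewrite properE H1A /=; apply/negP => sAH1.
  apply: (negP (proper_subn prH)); apply/subsetP => -[a c].
  rewrite in_setX => /andP[aA cC]; apply: pair_mem.
    by rewrite -inM1 (subsetP sAH1).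
  by apply: (subsetP sBCH); rewrite in_setX group1.
have eH1 := maxB2 _ prH1 BH1.

apply/eqP; rewrite eqEsubset sBCH andbT.
apply/subsetP => -[a c] acH; have [h1 _] := split_elt sH acH.
have := subsetP sH _ acH; rewrite !in_setX => /andP[_ ->]; rewrite andbT.
by rewrite -eH1 inM1.
Qed.

End Main.


Theorem lemma3p14 (gT hT : finGroupType) (A B : {group gT}) (C : {group hT})
    (m : nat) :
  A :!=: 1%g -> 0 < m -> odd m -> coprime #|A| m ->
  cyclic C -> #|C| = m ->
  maximal B A ->
  (forall B' : {group gT}, maximal B' A -> psi B' <= psi B) ->
  (psi A <= 7 * psi B ->
     [/\ maximal (setX B C) (setX A C),
         (forall M : {group gT * hT}, maximal M (setX A C) -> psi M <= psi (setX B C))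
       & (forall M : {group gT * hT}, (M \proper setX A C)%g -> psi M <= psi (setX B C))])
  /\
  (cyclic B -> #|A : B|%g = 2 ->
     psi A <= 7 * psi B /\
     [/\ maximal (setX B C) (setX A C),
         (forall M : {group gT * hT}, maximal M (setX A C) -> psi M <= psi (setX B C))
       & (forall M : {group gT * hT}, (M \proper setX A C)%g -> psi M <= psi (setX B C))]).
Proof.
move=> _ m0 oddm coAm cycC oC maxB bestB.
have partI : psi A <= 7 * psi B ->
     [/\ maximal (setX B C) (setX A C),
         (forall M : {group gT * hT}, maximal M (setX A C) -> psi M <= psi (setX B C))
       & (forall M : {group gT * hT}, (M \proper setX A C)%g -> psi M <= psi (setX B C))].
  move=> h7; split.
  - exact: maxBC coAm oC maxB.
  - move=> M maxM; apply: (proper_bound oddm coAm cycC oC maxB bestB h7).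
    exact: maxgroupp maxM.
  - by move=> M prM; apply: (proper_bound oddm coAm cycC oC maxB bestB h7).
split=> // cycB iAB.
have h := psi_idx2 (sBA maxB) cycB iAB.
by split=> //; apply: partI.
Qed.
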